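(* Let $V$ be a braided vector space of diagonal type over a field $F$ of characteristic zero with basis $x_1,\dots,x_n$ and braiding $C(x_i\otimes x_j)=p_{i,j}x_j\otimes x_i$, and let $\mathfrak B(V)$ be its Nichols algebra. The following are equivalent: (1) $\mathfrak B(V)=F\oplus\mathfrak L(V)_L$; (2) $\mathfrak B(V)=F\oplus\mathfrak L^-(V)$; (3) $p_{i,i}=-1$ and $p_{i,j}p_{j,i}=1$ for all $1\le i\ne j\le n$, and for every $m\ge2$ and every strictly decreasing sequence of letters $h_1>h_2>\cdots>h_m$ in $\{x_1,\dots,x_n\}$ (with $x_1<\cdots<x_n$) there exists $\tau\in\mathbb S_m$ such that $\prod_{j=1}^{m-1}\bigl(p_{h_{\tau(j)},\,h_{\tau(m)}\cdots h_{\tau(j+1)}}-1\bigr)\neq0$.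
   Context: $\mathfrak B(V)=T(V)/\bigoplus_{m\ge2}\ker S_m$ is $\mathbb Z^n$-graded with $\deg x_i=e_i$; for homogeneous $u,v$ with $\deg u=\sum a_ie_i$, $\deg v=\sum b_je_j$ put $p_{u,v}=\prod p_{i,j}^{a_ib_j}$. $\mathfrak L(V)_L$ is the Lie subalgebra of $\mathfrak B(V)$ generated by $V$ under $[u,v]_L=p_{v,u}uv-p_{u,v}vu$; $\mathfrak L^-(V)$ is the Lie subalgebra generated by $V$ under $[u,v]^-=uv-vu$; $F$ denotes the scalars $F\cdot1$ and equalities are as vector spaces. *)

(* Defs.v *)
From HB Require Import structures.
From mathcomp Require Import all_boot all_order all_algebra all_fingroup.
Set Implicit Arguments. Unset Strict Implicit. Unset Printing Implicit Defensive.
Import GRing.Theory.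
Local Open Scope ring_scope.

(* words in the letters x_0, ..., x_{n-1} (the paper's x_1 < ... < x_n) *)
Definition word (n : nat) := seq 'I_n.

(* coefficient functions on words; T(V) is the subspace of finitely
   supported ones (noncommutative polynomials in x_0..x_{n-1}) *)
Definition tens (F : Type) (n : nat) := word n -> F.

Definition tfinsupp (F : fieldType) n (f : tens F n) : Prop :=
  exists s : seq (word n), forall w, w \notin s -> f w = 0.

Definition tadd (F : fieldType) n (f g : tens F n) : tens F n := fun w => f w + g w.
Definition tsub (F : fieldType) n (f g : tens F n) : tens F n := fun w => f w - g w.
Definition tscale (F : fieldType) n (c : F) (f : tens F n) : tens F n := fun w => c * f w.
Definition tmul (F : fieldType) n (f g : tens F n) : tens F n :=
  fun w => \sum_(k < (size w).+1) f (take k w) * g (drop k w).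
Definition tone (F : fieldType) n : tens F n := fun w => (w == [::])%:R.
Definition tgen (F : fieldType) n (i : 'I_n) : tens F n := fun w => (w == [:: i])%:R.

(* braid-lifted action of s in S_m on a word of length m (diagonal braiding
   C(x_i ⊗ x_j) = p i j x_j ⊗ x_i):
   x_{v_1}...x_{v_m} |-> (prod_{a<b, s a > s b} p v_a v_b) x_{v_{s^-1 1}} ... x_{v_{s^-1 m}} *)
Definition perm_word n m (s : 'S_m) (v : m.-tuple 'I_n) : word n :=
  [seq tnth v ((s^-1)%g k) | k <- enum 'I_m].
Definition perm_coef (F : fieldType) n (p : 'I_n -> 'I_n -> F) m (s : 'S_m)
  (v : m.-tuple 'I_n) : F :=
  \prod_(a : 'I_m) \prod_(b : 'I_m | ((a < b) && (s b < s a))%N) p (tnth v a) (tnth v b).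

(* quantum symmetrizer S = ⊕_m S_m, S_m = sum_{s in S_m} (braid lift of s) *)
Definition symmetrizer (F : fieldType) n (p : 'I_n -> 'I_n -> F) (f : tens F n)
  : tens F n :=
  fun w => \sum_(v : (size w).-tuple 'I_n)
             \sum_(s : 'S_(size w) | perm_word s v == w) perm_coef p s v * f v.

(* the defining ideal ⊕_{m>=2} ker S_m of B(V) (S_0, S_1 are identities) *)
Definition nichols_ideal (F : fieldType) n (p : 'I_n -> 'I_n -> F) (f : tens F n)
  : Prop := tfinsupp f /\ forall w, symmetrizer p f w = 0.

(* bracket expressions in the generators *)
Inductive btree (n : nat) : Type :=
| BLeaf of 'I_n
| BNode of btree n & btree n.

Fixpoint tdeg n (t : btree n) : 'I_n -> nat :=
  match t with
  | BLeaf i => fun j => nat_of_bool (i == j)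
  | BNode t1 t2 => fun j => (tdeg t1 j + tdeg t2 j)%N
  end.

Definition pdeg (F : fieldType) n (p : 'I_n -> 'I_n -> F) (a b : 'I_n -> nat) : F :=
  \prod_(i : 'I_n) \prod_(j : 'I_n) p i j ^+ (a i * b j).

(* iterated [u,v]_L = p_{v,u} uv - p_{u,v} vu (computed in T(V), then projected) *)
Fixpoint evalL (F : fieldType) n (p : 'I_n -> 'I_n -> F) (t : btree n) : tens F n :=
  match t with
  | BLeaf i => tgen F i
  | BNode t1 t2 =>
      tsub (tscale (pdeg p (tdeg t2) (tdeg t1)) (tmul (evalL p t1) (evalL p t2)))
           (tscale (pdeg p (tdeg t1) (tdeg t2)) (tmul (evalL p t2) (evalL p t1)))
  end.

Fixpoint evalMinus (F : fieldType) n (t : btree n) : tens F n :=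
  match t with
  | BLeaf i => tgen F i
  | BNode t1 t2 => tsub (tmul (evalMinus F t1) (evalMinus F t2)) (tmul (evalMinus F t2) (evalMinus F t1))
  end.

Definition tspan (F : fieldType) n (E : btree n -> tens F n) (f : tens F n) : Prop :=
  exists k (ts : 'I_k -> btree n) (cs : 'I_k -> F),
    forall w, f w = \sum_(i < k) cs i * E (ts i) w.

(* B(V) = F·1 ⊕ π(span E) as vector spaces, where π : T(V) -> B(V) is the
   projection; expressed through the ideal: every element of T(V) is congruent
   mod the ideal to c·1 + g with g in span E, and F·1 ∩ π(span E) = 0. *)
Definition B_eq_F_oplus (F : fieldType) n (p : 'I_n -> 'I_n -> F)
  (E : btree n -> tens F n) : Prop :=
  (forall f, tfinsupp f -> exists c g,
      tspan E g /\ nichols_ideal p (tsub f (tadd (tscale c (@tone F n)) g))) /\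
  (forall c g, tspan E g -> nichols_ideal p (tsub (tscale c (@tone F n)) g) -> c = 0).

Definition cond3 (F : fieldType) n (p : 'I_n -> 'I_n -> F) : Prop :=
  [/\ (forall i, p i i = -1),
      (forall i j, i != j -> p i j * p j i = 1) &
      (forall m (h : 'I_m -> 'I_n), (2 <= m)%N ->
         (forall a b : 'I_m, (a < b)%N -> (h b < h a)%N) ->
         exists tau : 'S_m,
           \prod_(j : 'I_m | (j.+1 < m)%N)
              (\prod_(k : 'I_m | (j < k)%N) p (h (tau j)) (h (tau k)) - 1) != 0)].

(* Main.v *)
Require Import Defs.
From HB Require Import structures.
From mathcomp Require Import all_boot all_order all_algebra all_fingroup.
From mathcomp Require Import ring zify.
From Stdlib Require Import FunctionalExtensionality.
Import GRing.Theory.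
Local Open Scope ring_scope.
Set Implicit Arguments. Unset Strict Implicit. Unset Printing Implicit Defensive.
Section S.
Variables (F : fieldType) (n : nat) (p : 'I_n -> 'I_n -> F).
Hypothesis pnz : forall i j, p i j != 0.

Fixpoint Lam (w : seq 'I_n) : F :=
  if w is x :: w' then (\prod_(y <- w' | (y < x)%N) p x y) * Lam w' else 1.
Definition chi (a b : seq 'I_n) : F := \prod_(x <- a) \prod_(y <- b | (y < x)%N) p x y.
Definition Pm (a b : seq 'I_n) : F := \prod_(x <- a) \prod_(y <- b) p x y.
Definition beta a b := chi a b - chi b a.

Lemma Lam_cat a b : Lam (a ++ b) = Lam a * Lam b * chi a b.
Proof.
elim: a => [|x a IH] /=; first by rewrite /chi big_nil mul1r mulr1.
by rewrite big_cat IH /chi big_cons /=; ring.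
Qed.

Lemma Lam_neq0 w : Lam w != 0.
Proof.
elim: w => [|x w IH] /=; first exact: oner_neq0.
rewrite mulf_neq0 // prodf_seq_neq0; apply/allP => y _; apply/implyP => _; exact: pnz.
Qed.

Lemma chi_neq0 a b : chi a b != 0.
Proof.
rewrite prodf_seq_neq0; apply/allP => x _; apply/implyP => _.
rewrite prodf_seq_neq0; apply/allP => y _; apply/implyP => _; exact: pnz.
Qed.

Lemma chi_catl a b c : chi (a ++ b) c = chi a c * chi b c.
Proof. by rewrite /chi big_cat. Qed.

Lemma chi_catr a b c : chi a (b ++ c) = chi a b * chi a c.
Proof. by rewrite /chi -big_split; apply: eq_bigr => x _; rewrite big_cat. Qed.

Lemma chi_perml a a' b : perm_eq a a' -> chi a b = chi a' b.
Proof. by move=> H; rewrite /chi (perm_big _ H). Qed.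

Lemma chi_permr a b b' : perm_eq b b' -> chi a b = chi a b'.
Proof. by move=> H; rewrite /chi; apply: eq_bigr => x _; rewrite (perm_big _ H). Qed.

Lemma beta_perml a a' b : perm_eq a a' -> beta a b = beta a' b.
Proof. by move=> H; rewrite /beta (chi_perml _ H) (chi_permr _ H). Qed.

Lemma beta_permr a b b' : perm_eq b b' -> beta a b = beta a b'.
Proof. by move=> H; rewrite /beta (chi_perml _ H) (chi_permr _ H). Qed.

Lemma betaN a b : beta b a = - beta a b.
Proof. by rewrite /beta opprB. Qed.

Lemma beta_nil a : beta a [::] = 0.
Proof. by rewrite /beta /chi big_nil; under eq_bigr do rewrite big_nil; rewrite big1_eq subrr. Qed.

Lemma jacobi A b1 B : beta A (b1 :: B) * beta [:: b1] B =
  beta A [:: b1] * beta (A ++ [:: b1]) B + beta [:: b1] (A ++ B) * beta A B.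
Proof.
rewrite /beta (_ : b1 :: B = [:: b1] ++ B) //.
rewrite !chi_catl !chi_catr; ring.
Qed.

Definition H2 := (forall i, p i i = -1) /\ (forall i j, i != j -> p i j * p j i = 1).

Lemma chiC (h2 : H2) a b : (forall x, x \in a -> x \notin b) -> chi b a = Pm b a * chi a b.
Proof.
move=> dis; rewrite /chi /Pm.
rewrite [X in _ = _ * X](eq_bigr (fun x : 'I_n => \prod_(y <- b) (if (y < x)%N then p x y else 1))); last by move=> x _; rewrite big_mkcond.
rewrite [X in _ = _ * X]exchange_big -big_split /=.
rewrite big_seq [in RHS]big_seq; apply: eq_bigr => y yb.
rewrite big_mkcond -big_split /= big_seq [in RHS]big_seq; apply: eq_bigr => x xa.
have nxy : x != y by apply: contraNneq (dis x xa) => ->.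
case: (ltngtP x y) => Hxy; rewrite ?mulr1 //.
  by rewrite h2.2 // eq_sym.
by move: nxy; rewrite -val_eqE /= Hxy eqxx.
Qed.

Lemma Pm_inv (h2 : H2) a b : (forall x, x \in a -> x \notin b) -> Pm a b * Pm b a = 1.
Proof.
move=> dis; rewrite /Pm [X in _ * X]exchange_big -big_split /=.
rewrite big_seq big1 // => x xa; rewrite -big_split /= big_seq big1 // => y yb.
apply: h2.2; by apply: contraNneq (dis x xa) => ->.
Qed.

Lemma beta_P (h2 : H2) x l : x \notin l -> (beta [:: x] l != 0) = (Pm [:: x] l != 1).
Proof.
move=> xl.
have dis : forall y, y \in [:: x] -> y \notin l by move=> y; rewrite inE => /eqP ->.
rewrite /beta (chiC h2 dis).
have inv := Pm_inv h2 dis.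
rewrite -{1}(mul1r (chi [:: x] l)) -mulrBl mulf_eq0 negb_or chi_neq0 andbT subr_eq0.
apply/idP/idP; apply: contra => /eqP E.
  by rewrite -inv E mul1r.
by rewrite -inv -E mulr1.
Qed.

Fixpoint leaves (t : btree n) : seq 'I_n :=
  match t with BLeaf i => [:: i] | BNode t1 t2 => leaves t1 ++ leaves t2 end.

Lemma tdeg_count t j : tdeg t j = count_mem j (leaves t).
Proof. by elim: t => [i|t1 IH1 t2 IH2] /=; rewrite ?addn0 // count_cat IH1 IH2. Qed.

Lemma prod_count (g : 'I_n -> F) s : \prod_(i : 'I_n) g i ^+ count_mem i s = \prod_(y <- s) g y.
Proof.
elim: s => [|x s IH]; first by rewrite big_nil big1 // => i _; rewrite expr0.
rewrite big_cons -IH /=; under eq_bigr do rewrite exprD; rewrite big_split /=; congr (_ * _).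
rewrite (bigD1 x) //= eqxx expr1 big1 ?mulr1 // => i ne.
by rewrite eq_sym (negPf ne) expr0.
Qed.

Lemma pdeg_Pm a b : pdeg p (fun j => count_mem j a) (fun j => count_mem j b) = Pm a b.
Proof.
rewrite /pdeg /Pm -(prod_count (fun i => \prod_(y <- b) p i y)).
apply: eq_bigr => i _; rewrite -prod_count -prodrXl; apply: eq_bigr => j _.
by rewrite mulnC exprM.
Qed.

Lemma pdeg_tdeg t1 t2 : pdeg p (tdeg t1) (tdeg t2) = Pm (leaves t1) (leaves t2).
Proof.
rewrite -pdeg_Pm /pdeg; apply: eq_bigr => i _; apply: eq_bigr => j _.
by rewrite !tdeg_count.
Qed.

Lemma leaves_gt0 t : (0 < size (leaves t))%N.
Proof. by elim: t => [i|t1 IH1 t2 IH2] //=; rewrite size_cat addn_gt0 IH1. Qed.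

Lemma tmul_neq0 (f g : tens F n) w : tmul f g w != 0 ->
  exists k : nat, f (take k w) != 0 /\ g (drop k w) != 0.
Proof.
move=> H.
case: (boolP [exists k : 'I_(size w).+1, (f (take k w) != 0) && (g (drop k w) != 0)]).
  by case/existsP => k /andP[H1 H2]; exists k.
move=> /existsPn Hn; exfalso; move/eqP: H; apply; rewrite /tmul big1 // => k _.
by move: (Hn k); rewrite negb_and !negbK => /orP[] /eqP ->; rewrite ?mul0r ?mulr0.
Qed.

Lemma supp_mul (f g : tens F n) l1 l2 : (forall w, f w != 0 -> perm_eq w l1) ->
  (forall w, g w != 0 -> perm_eq w l2) -> forall w, tmul f g w != 0 -> perm_eq w (l1 ++ l2).
Proof.
move=> Hf Hg w /tmul_neq0 [k [H1 H2]]; rewrite -(cat_take_drop k w).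
by apply: perm_cat; [apply: Hf | apply: Hg].
Qed.

Lemma sub_neq0 (x y : F) : x - y != 0 -> x != 0 \/ y != 0.
Proof.
move=> H; case: (boolP (x == 0)) => [/eqP hx|]; last by left.
by right; move: H; rewrite hx sub0r oppr_eq0.
Qed.

Lemma supp_gen (i : 'I_n) (w : seq 'I_n) : tgen F i w != 0 -> perm_eq w [:: i].
Proof. by rewrite /tgen; case: (w =P [:: i]) => [-> _|_]; rewrite ?perm_refl ?eqxx. Qed.

Lemma supp_minus t w : evalMinus F t w != 0 -> perm_eq w (leaves t).
Proof.
elim: t w => [i|t1 IH1 t2 IH2] w /=; first exact: supp_gen.
rewrite /tsub => /sub_neq0 [H|H]; first exact: (supp_mul IH1 IH2).
by apply: perm_trans (supp_mul IH2 IH1 H) _; rewrite perm_catC.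
Qed.

Lemma supp_L t w : evalL p t w != 0 -> perm_eq w (leaves t).
Proof.
elim: t w => [i|t1 IH1 t2 IH2] w /=; first exact: supp_gen.
rewrite /tsub /tscale => /sub_neq0 [H|H]; move: H; rewrite mulf_eq0 negb_or => /andP[_ H].
  exact: (supp_mul IH1 IH2).
by apply: perm_trans (supp_mul IH2 IH1 H) _; rewrite perm_catC.
Qed.

Lemma supp_nil (E : btree n -> tens F n) : (forall t w, E t w != 0 -> perm_eq w (leaves t)) ->
  forall t, E t [::] = 0.
Proof.
move=> HE t; apply/eqP; apply: contraT => /HE /perm_size /= H.
by move: (leaves_gt0 t); rewrite -H.
Qed.

Definition Psi m (u : seq 'I_n) (f : tens F n) : F :=
  \sum_(v : m.-tuple 'I_n | perm_eq v u) Lam v * f v.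

Lemma Psi_perm m u u' f : perm_eq u u' -> Psi m u f = Psi m u' f.
Proof. by move=> H; apply: eq_bigl => v; rewrite (permPr H). Qed.

Lemma Psi_ext m u (f g : tens F n) : (forall w, f w = g w) -> Psi m u f = Psi m u g.
Proof. by move=> H; apply: eq_bigr => v _; rewrite H. Qed.

Lemma Psi_sub m u (f g : tens F n) : Psi m u (tsub f g) = Psi m u f - Psi m u g.
Proof. by rewrite /Psi -sumrB; apply: eq_bigr => v _; rewrite /tsub mulrBr. Qed.

Lemma Psi_add m u (f g : tens F n) : Psi m u (tadd f g) = Psi m u f + Psi m u g.
Proof. by rewrite /Psi -big_split; apply: eq_bigr => v _; rewrite /tadd mulrDr. Qed.

Lemma Psi_scale m u c (f : tens F n) : Psi m u (tscale c f) = c * Psi m u f.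
Proof. by rewrite /Psi mulr_sumr; apply: eq_bigr => v _; rewrite /tscale mulrCA. Qed.

Lemma Psi_sum m u k (E : btree n -> tens F n) (ts : 'I_k -> btree n) (cs : 'I_k -> F) :
  Psi m u (fun w => \sum_(i < k) cs i * E (ts i) w) = \sum_(i < k) cs i * Psi m u (E (ts i)).
Proof.
rewrite /Psi; under eq_bigr do rewrite mulr_sumr.
rewrite exchange_big /=; apply: eq_bigr => i _; rewrite mulr_sumr.
by apply: eq_bigr => v _; rewrite mulrCA.
Qed.

Definition delta (w : seq 'I_n) : tens F n := fun x => (x == w)%:R.

Lemma Psi_delta w : Psi (size w) w (delta w) = Lam w.
Proof.
rewrite /Psi (bigD1 (in_tuple w)) ?perm_refl //= big1 ?addr0 /delta ?eqxx ?mulr1 // => v /andP[_ ne].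
by rewrite /delta (_ : (val v == w) = false) ?mulr0 //; apply/negbTE; move: ne; rewrite -val_eqE.
Qed.

Lemma Psi_delta0 m u w : ~~ perm_eq w u -> Psi m u (delta w) = 0.
Proof.
move=> H; rewrite /Psi big1 // => v pv; rewrite /delta.
case: eqP => [E|_]; last by rewrite mulr0.
by move: H; rewrite -E pv.
Qed.

Lemma sum_tuple_cat m1 m2 (G : (m1 + m2)%N.-tuple 'I_n -> F) :
  \sum_(v : (m1 + m2)%N.-tuple 'I_n) G v =
  \sum_(v1 : m1.-tuple 'I_n) \sum_(v2 : m2.-tuple 'I_n) G (cat_tuple v1 v2).
Proof.
rewrite pair_big /=.
pose h := fun x : m1.-tuple 'I_n * m2.-tuple 'I_n => cat_tuple x.1 x.2.
have hinj : injective h.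
  move=> [a b] [c d] /(congr1 val) /= /eqP; rewrite eqseq_cat ?size_tuple //.
  by case/andP => /eqP/val_inj -> /eqP/val_inj ->.
have hbij : bijective h.
  by apply: inj_card_bij hinj _; rewrite card_prod !card_tuple expnD.
by rewrite (reindex h) //; apply: onW_bij.
Qed.

Lemma tmul_split (f g : tens F n) m1 m2 w : (forall x, f x != 0 -> size x = m1) ->
  size w = (m1 + m2)%N -> tmul f g w = f (take m1 w) * g (drop m1 w).
Proof.
move=> Hf sw.
have lt : (m1 < (size w).+1)%N by rewrite ltnS sw leq_addr.
rewrite /tmul (bigD1 (Ordinal lt)) //= big1 ?addr0 // => k /eqP ne.
case: (f (take k w) =P 0) => [->|/eqP nz]; first by rewrite mul0r.
exfalso; apply: ne; apply: val_inj => /=.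
move: (Hf _ nz); rewrite size_take_min => e.
have := ltn_ord k; move: e; clear nz; move: (nat_of_ord k) => kk; rewrite sw; lia.
Qed.

Lemma Psi_mul u1 u2 (f g : tens F n) : (forall w, f w != 0 -> perm_eq w u1) ->
  (forall w, g w != 0 -> perm_eq w u2) ->
  Psi (size u1 + size u2)%N (u1 ++ u2) (tmul f g) =
  chi u1 u2 * Psi (size u1) u1 f * Psi (size u2) u2 g.
Proof.
move=> Hf Hg; rewrite /Psi big_mkcond sum_tuple_cat /=.
rewrite [X in _ = _ * X * _]big_mkcond [X in _ = _ * _ * X]big_mkcond /=.
rewrite -mulrA big_distrl mulr_sumr /=; apply: eq_bigr => v1 _.
rewrite big_distrr mulr_sumr /=; apply: eq_bigr => v2 _.
have Hf' : forall x, f x != 0 -> size x = size u1 by move=> x /Hf /perm_size.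
rewrite (@tmul_split f g (size u1) (size u2)) ?size_cat ?size_tuple //.
rewrite take_size_cat ?drop_size_cat ?size_tuple //.
case: (f v1 =P 0) => [->|/eqP nf]; first by rewrite !(mul0r, mulr0, if_same).
case: (g v2 =P 0) => [->|/eqP ng]; first by rewrite !(mul0r, mulr0, if_same).
have p1 := Hf _ nf; have p2 := Hg _ ng.
rewrite perm_cat // p1 p2 Lam_cat (chi_perml _ p1) (chi_permr _ p2); ring.
Qed.

Lemma LamE m (v : m.-tuple 'I_n) : Lam v =
  \prod_(a : 'I_m) \prod_(b : 'I_m | (a < b)%N && (tnth v b < tnth v a)%N) p (tnth v a) (tnth v b).
Proof.
elim: m v => [|m IH] v; first by rewrite tuple0 /= big_ord0.
case: v / tupleP => x v /=.
rewrite big_ord_recl /= IH; congr (_ * _).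
  rewrite big_tuple big_mkcond [RHS]big_mkcond big_ord_recl /= mul1r.
  by apply: eq_bigr => b _; rewrite tnthS tnth0.
apply: eq_bigr => a _; rewrite big_mkcond [RHS]big_mkcond big_ord_recl /= mul1r.
apply: eq_bigr => b _; rewrite !tnthS.
by rewrite /bump /= !add1n ltnS.
Qed.

Lemma Lam_perm m (s : 'S_m) (v : m.-tuple 'I_n) : Lam (perm_word s v) =
  \prod_(a : 'I_m) \prod_(b : 'I_m | (s a < s b)%N && (tnth v b < tnth v a)%N) p (tnth v a) (tnth v b).
Proof.
rewrite (_ : perm_word s v = [tuple tnth v ((s^-1)%g k) | k < m]) // LamE.
rewrite (reindex_inj (@perm_inj _ s)); apply: eq_bigr => a _.
rewrite (reindex_inj (@perm_inj _ s)) /=; apply: eq_big => [b|b _]; by rewrite !tnth_mktuple !permK.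
Qed.

Lemma pair_prod m (H : 'I_m -> 'I_m -> F) :
  \prod_(a : 'I_m) \prod_(b : 'I_m) H a b =
  (\prod_(a : 'I_m) \prod_(b : 'I_m | (a < b)%N) (H a b * H b a)) * \prod_(a : 'I_m) H a a.
Proof.
have sp : forall a : 'I_m, \prod_(b : 'I_m) H a b =
    (\prod_(b : 'I_m | (a < b)%N) H a b) * (\prod_(b : 'I_m | (b < a)%N) H a b) * H a a.
  move=> a; rewrite (bigID (fun b : 'I_m => (a < b)%N)) /= -mulrA; congr (_ * _).
  rewrite (bigID (fun b : 'I_m => (b < a)%N)) /=; congr (_ * _).
    by apply: eq_bigl => b; case: ltngtP.
  rewrite (big_pred1 a) // => b; rewrite /= -val_eqE /=; case: ltngtP => //.
under eq_bigr do rewrite sp.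
rewrite big_split /=; congr (_ * _).
rewrite big_split /=.
under [X in _ = X]eq_bigr do rewrite big_split /=.
rewrite [X in _ = X]big_split /=; congr (_ * _).
rewrite (eq_bigr (fun a : 'I_m => \prod_(b : 'I_m) (if (b < a)%N then H a b else 1))); last by move=> a _; rewrite big_mkcond.
rewrite exchange_big /=; apply: eq_bigr => a _; by rewrite [RHS]big_mkcond.
Qed.

Definition eps m (s : 'S_m) (v : m.-tuple 'I_n) : F :=
  \prod_(a : 'I_m) \prod_(b : 'I_m | (a < b)%N && ((s b < s a)%N && (tnth v a == tnth v b))) (-1).

Lemma partII (h2 : H2) m (s : 'S_m) (v : m.-tuple 'I_n) :
  perm_coef p s v * Lam (perm_word s v) = Lam v * eps s v.
Proof.
rewrite Lam_perm LamE /eps /perm_coef.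
rewrite [X in _ * X = _](eq_bigr (fun a : 'I_m => \prod_(b : 'I_m) (if (s a < s b)%N && (tnth v b < tnth v a)%N then p (tnth v a) (tnth v b) else 1))); last by move=> a _; rewrite big_mkcond.
rewrite pair_prod [X in _ * (_ * X)]big1 ?mulr1; last by move=> a _; rewrite ltnn.
rewrite -!big_split /=; apply: eq_bigr => a _.
rewrite !big_mkcondr -!big_split /=; apply: eq_bigr => b ab.
set x := tnth v a; set y := tnth v b.
have sab : s a != s b by rewrite (inj_eq perm_inj) -val_eqE /= neq_ltn ab.
have xyE : (x == y) = (val x == val y) by rewrite -val_eqE.
move: sab; rewrite -val_eqE /= => sab.
case: (ltngtP (s a) (s b)) sab => // hs _; rewrite ?andbF ?andbT /=;
  case: (ltngtP x y) xyE => hxy xyE. all: try rewrite xyE. all: rewrite /= ?mulr1 ?mul1r //.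
- by apply: h2.2; rewrite xyE.
- by move: hxy => /val_inj ->; rewrite h2.1.
Qed.

Lemma perm_word_tuple m (s : 'S_m) (v : m.-tuple 'I_n) :
  perm_word s v = [tuple tnth v ((s^-1)%g k) | k < m].
Proof. by []. Qed.

Lemma perm_word_perm m (s : 'S_m) (v : m.-tuple 'I_n) : perm_eq (perm_word s v) v.
Proof.
have -> : perm_word s v = map (tnth v) (map (fun k => (s^-1)%g k) (enum 'I_m)).
  by rewrite -map_comp.
rewrite -[X in perm_eq _ X](map_tnth_enum v); apply: perm_map.
apply: uniq_perm; rewrite ?enum_uniq ?(map_inj_uniq perm_inj) ?enum_uniq // => x.
rewrite mem_enum; apply/mapP; exists (s x); rewrite ?mem_enum ?permK //.
Qed.

Lemma perm_word_ex m (v : m.-tuple 'I_n) u : perm_eq u v -> exists s : 'S_m, perm_word s v = u.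
Proof.
case/tuple_permP => q ->; exists (q^-1)%g.
by rewrite /perm_word invgK.
Qed.

Lemma perm_word_inj m (v : m.-tuple 'I_n) (s s' : 'S_m) : uniq v ->
  perm_word s v = perm_word s' v -> s = s'.
Proof.
move=> /tuple_uniqP inj E.
have E' : [tuple tnth v ((s^-1)%g k) | k < m] = [tuple tnth v ((s'^-1)%g k) | k < m].
  by apply: val_inj.
apply: invg_inj; apply/permP => k.
by move: (congr1 (fun t => tnth t k) E') => /=; rewrite !tnth_mktuple => /inj.
Qed.

Lemma eps1 m (s : 'S_m) (v : m.-tuple 'I_n) : uniq v -> eps s v = 1.
Proof.
move=> /tuple_uniqP inj; rewrite /eps big1 // => a _; rewrite big1 // => b /andP[ab /andP[_ /eqP e]].
by move: ab; rewrite (inj _ _ e) ltnn.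
Qed.

Lemma sym_uniq (h2 : H2) u (f : tens F n) : uniq u ->
  symmetrizer p f u = (Lam u)^-1 * Psi (size u) u f.
Proof.
move=> uu; rewrite /symmetrizer /Psi mulr_sumr [RHS]big_mkcond /=; apply: eq_bigr => v _.
case: ifP => pv.
  have uv : uniq v by rewrite (perm_uniq pv).
  have [s0 E0] : exists s0 : 'S_(size u), perm_word s0 v = u by apply: perm_word_ex; rewrite perm_sym.
  rewrite (big_pred1 s0) => [|s]; last first.
    by apply/eqP/eqP => [E|->//]; apply: (perm_word_inj uv); rewrite E E0.
  have := partII h2 s0 v; rewrite E0 eps1 // mulr1 => <-.
  by field; apply: Lam_neq0.
rewrite big1 // => s /eqP E; move: pv.
by rewrite -[X in perm_eq _ X]E perm_sym perm_word_perm.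
Qed.

Lemma nonuniq_pair m (v : m.-tuple 'I_n) : ~~ uniq v -> exists i j : 'I_m,
  [/\ (i < j)%N, tnth v i = tnth v j & forall k : 'I_m, (i < k)%N -> (k < j)%N -> tnth v k != tnth v i].
Proof.
move=> nu.
have [i [j [ij e]]] : exists i j : 'I_m, (i < j)%N /\ tnth v i = tnth v j.
  case: (boolP [exists i : 'I_m, [exists j : 'I_m, (i < j)%N && (tnth v i == tnth v j)]]).
    by case/existsP => i /existsP [j /andP[ij /eqP e]]; exists i, j.
  move=> /existsPn H; exfalso; move: nu; apply/negP; rewrite negbK; apply/tuple_uniqP => x y e.
  case: (ltngtP x y) => [xy|yx|/val_inj //].
    by move: (H x) => /existsPn /(_ y); rewrite xy e eqxx.
  by move: (H y) => /existsPn /(_ x); rewrite yx e eqxx.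
have Pj : (i < j)%N && (tnth v j == tnth v i) by rewrite ij e eqxx.
case: (@arg_minnP _ j (fun k : 'I_m => (i < k)%N && (tnth v k == tnth v i)) (fun k : 'I_m => nat_of_ord k) Pj).
move=> j' /andP[ij' /eqP e'] min.
exists i, j'; split => // k ik kj; apply/negP => /eqP ek.
by move: (min k); rewrite ik ek eqxx /= => /(_ isT); rewrite leqNgt kj.
Qed.

Lemma prod_pairs m (C : 'I_m -> 'I_m -> bool) :
  \prod_(a : 'I_m) \prod_(b : 'I_m | C a b) (-1 : F) =
  \prod_(q : 'I_m * 'I_m) (if C q.1 q.2 then -1 else 1).
Proof. by rewrite pair_big_dep /= big_mkcond. Qed.

Lemma eps_swap m (s : 'S_m) (v : m.-tuple 'I_n) (i j : 'I_m) :
  (i < j)%N -> tnth v i = tnth v j ->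
  (forall k : 'I_m, (i < k)%N -> (k < j)%N -> tnth v k != tnth v i) ->
  eps (tperm i j * s)%g v = - eps s v.
Proof.
move=> ij eij btw; set t := tperm i j.
have vt : forall x, tnth v (t x) = tnth v x.
  by move=> x; rewrite /t; case: tpermP => // ->.
rewrite /eps !prod_pairs.
have hinj : injective (fun q : 'I_m * 'I_m => (t q.1, t q.2)).
  by move=> [a b] [c d] /= [/perm_inj -> /perm_inj ->].
rewrite (reindex_inj hinj) /=.
under eq_bigr => q _ do rewrite !permM !tpermK !vt.
have nij : i != j by rewrite -val_eqE /= neq_ltn ij.
have q01 : (i, j) != (j, i) by rewrite xpair_eqE negb_and nij.
have q10 : (j, i) != (i, j) by rewrite eq_sym.
rewrite (bigD1 (i, j)) // (bigD1 (j, i)) ?q10 //=.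
rewrite [in RHS](bigD1 (i, j)) // [in RHS](bigD1 (j, i)) ?q10 //=.
have ji : (j < i)%N = false by rewrite ltnNge ltnW.
rewrite /t tpermL tpermR ji ij eij eqxx /=.
have sij : s i != s j by rewrite (inj_eq perm_inj).
set R1 := \prod_(q | _) _; set R2 := \prod_(q | _) _.
suff -> : R1 = R2.
  move: sij; rewrite -val_eqE /=; case: ltngtP => // _ _; rewrite ?mul1r ?mulN1r ?opprK //.
rewrite /R1 /R2; apply: eq_bigr => [[a b]] /= /andP[qa qb].
case: (boolP (tnth v a == tnth v b)) => eab; rewrite ?andbF //.
suff -> : (tperm i j a < tperm i j b)%N = (a < b)%N by [].
have hb : (a == i) || (a == j) -> ~~ ((i < b)%N && (b < j)%N).
  move=> hai; apply/negP => /andP[ib bj]; move: (btw b ib bj).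
  by case/orP: hai => /eqP ea; rewrite -(eqP eab) ea ?eij eqxx.
have ha : (b == i) || (b == j) -> ~~ ((i < a)%N && (a < j)%N).
  move=> hbi; apply/negP => /andP[ia aj]; move: (btw a ia aj).
  by case/orP: hbi => /eqP eb; rewrite (eqP eab) eb ?eij eqxx.
move: qa qb; rewrite !xpair_eqE.
case: (tpermP i j a) => [ai|aj|/eqP ai /eqP aj]; case: (tpermP i j b) => [bi|bj|/eqP bi /eqP bj];
  try subst a; try subst b; rewrite ?eqxx //= => h1 h2.
all: try by rewrite !ltnn.
all: move: ha hb; rewrite ?eqxx ?orbT /= => ha hb.
all: try (move: ai; rewrite -val_eqE /= => ai).
all: try (move: aj; rewrite -val_eqE /= => aj).
all: try (move: bi; rewrite -val_eqE /= => bi).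
all: try (move: bj; rewrite -val_eqE /= => bj).
all: try have {}ha := ha isT; try have {}hb := hb isT.
all: apply/idP/idP => ?; lia.
Qed.

Lemma sym_nonuniq (h2 : H2) (two : (2%:R : F) != 0) u (f : tens F n) : ~~ uniq u ->
  symmetrizer p f u = 0.
Proof.
move=> nu; rewrite /symmetrizer big1 // => v _.
case: (boolP (uniq v)) => uv.
  rewrite big1 // => s /eqP E; move: nu.
  by rewrite -[X in uniq X]E (perm_uniq (perm_word_perm s v)) uv.
have [i [j [ij eij btw]]] := nonuniq_pair uv.
rewrite (eq_bigr (fun s => Lam v * (Lam u)^-1 * f v * eps s v)); last first.
  move=> s /eqP E; have := partII h2 s v; rewrite [perm_word s v]E => H.
  have : perm_coef p s v = Lam v * eps s v / Lam u.
    by rewrite -H; field; apply: Lam_neq0.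
  by move=> ->; field; apply: Lam_neq0.
rewrite -mulr_sumr; apply/eqP; rewrite mulf_eq0; apply/orP; right; apply/eqP.
set S := \sum_(s | _) _.
have SN : S = - S.
  rewrite {1}/S (reindex_inj (mulgI (tperm i j))) /=.
  rewrite -sumrN; apply: eq_big => [s|s _]; last exact: eps_swap.
  congr (_ == u); rewrite !perm_word_tuple; congr val; apply: eq_mktuple => k.
  rewrite invMg permM tpermV; case: tpermP => // ->; by rewrite eij.
have : S *+ 2 = 0 by rewrite mulr2n {1}SN addNr.
by move/eqP; rewrite -mulr_natl mulf_eq0 (negPf two) /= => /eqP.
Qed.

Lemma ideal_iff (h2 : H2) (two : (2%:R : F) != 0) (f : tens F n) :
  nichols_ideal p f <-> tfinsupp f /\ (forall u, uniq u -> Psi (size u) u f = 0).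
Proof.
split.
  case=> fs H; split => // u uu; move: (H u); rewrite sym_uniq // => /eqP.
  by rewrite mulf_eq0 invr_eq0 (negPf (Lam_neq0 u)) /= => /eqP.
case=> fs H; split => // w; case: (boolP (uniq w)) => uw.
  by rewrite sym_uniq // H // mulr0.
exact: sym_nonuniq.
Qed.

Lemma uniq_dis (a b : seq 'I_n) : uniq (a ++ b) -> forall x, x \in a -> x \notin b.
Proof.
rewrite cat_uniq => /and3P[_ H _] x xa; apply/negP => xb; move/negP: H; apply.
by apply/hasP; exists x.
Qed.

Definition PE (E : btree n -> tens F n) t := Psi (size (leaves t)) (leaves t) (E t).

Fixpoint good (t : btree n) : bool :=
  if t is BNode t1 t2 then [&& good t1, good t2 & beta (leaves t1) (leaves t2) != 0] else true.

Lemma PE_leaf E i : E (BLeaf i) = tgen F i -> PE E (BLeaf i) = 1.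
Proof.
rewrite /PE => ->; rewrite (_ : tgen F i = delta [:: i]) // (Psi_delta [:: i]) /=.
by rewrite big_nil mulr1.
Qed.

Lemma PE_minus_node t1 t2 : PE (@evalMinus F n) (BNode t1 t2) =
  PE (@evalMinus F n) t1 * PE (@evalMinus F n) t2 * beta (leaves t1) (leaves t2).
Proof.
rewrite /PE /= Psi_sub size_cat (Psi_mul (@supp_minus t1) (@supp_minus t2)).
rewrite (@Psi_perm _ (leaves t1 ++ leaves t2) (leaves t2 ++ leaves t1)); last by rewrite perm_catC.
rewrite [(size (leaves t1) + _)%N]addnC (Psi_mul (@supp_minus t2) (@supp_minus t1)).
by rewrite /beta; ring.
Qed.

Lemma PE_L_node (h2 : H2) t1 t2 : uniq (leaves t1 ++ leaves t2) -> PE (evalL p) (BNode t1 t2) =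
  - (PE (evalL p) t1 * PE (evalL p) t2 * beta (leaves t1) (leaves t2)).
Proof.
move=> uc; have dis := uniq_dis uc.
rewrite /PE /= Psi_sub !Psi_scale size_cat (Psi_mul (@supp_L t1) (@supp_L t2)).
rewrite (@Psi_perm _ (leaves t1 ++ leaves t2) (leaves t2 ++ leaves t1)); last by rewrite perm_catC.
rewrite [(size (leaves t1) + _)%N]addnC (Psi_mul (@supp_L t2) (@supp_L t1)).
rewrite !pdeg_tdeg /beta (chiC h2 dis).
have xy := Pm_inv h2 dis.
have ny : Pm (leaves t2) (leaves t1) != 0.
  by apply/eqP => e; move: xy; rewrite e mulr0 => /eqP; rewrite eq_sym oner_eq0.
have -> : Pm (leaves t1) (leaves t2) = (Pm (leaves t2) (leaves t1))^-1.
  by rewrite -(mulfK ny (Pm (leaves t1) (leaves t2))) xy mul1r.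
by field.
Qed.

Lemma PE_neq0_minus t : (PE (@evalMinus F n) t != 0) = good t.
Proof.
elim: t => [i|t1 IH1 t2 IH2]; first by rewrite PE_leaf // oner_neq0.
by rewrite PE_minus_node /= !mulf_eq0 !negb_or IH1 IH2 andbA.
Qed.

Lemma PE_neq0_L (h2 : H2) t : uniq (leaves t) -> (PE (evalL p) t != 0) = good t.
Proof.
elim: t => [i|t1 IH1 t2 IH2] uc; first by rewrite PE_leaf // oner_neq0.
have uc' := uc; move: uc'; rewrite /= cat_uniq => /and3P[u1 _ u2].
by rewrite PE_L_node // oppr_eq0 /= !mulf_eq0 !negb_or IH1 // IH2 // andbA.
Qed.

Fixpoint combgood (o : seq 'I_n) : bool :=
  if o is x :: o' then ((o' == [::]) || (beta [:: x] o' != 0)) && combgood o' else true.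

Fixpoint comb (x : 'I_n) (o : seq 'I_n) : btree n :=
  if o is y :: o' then BNode (BLeaf x) (comb y o') else BLeaf x.

Lemma comb_leaves x o : leaves (comb x o) = x :: o.
Proof. by elim: o x => //= y o IH x; rewrite IH. Qed.

Lemma comb_good x o : good (comb x o) = combgood (x :: o).
Proof.
elim: o x => [|y o IH] x //; rewrite [comb _ _]/= [good _]/= IH comb_leaves.
by rewrite [combgood (x :: _)]/= andbC.
Qed.

Lemma stepC oB : forall oA, combgood oA -> combgood oB -> beta oA oB != 0 ->
  exists o, perm_eq o (oA ++ oB) /\ combgood o.
Proof.
elim: oB => [|b1 oB' IH] oA gA gB bne; first by rewrite beta_nil eqxx in bne.
case: (boolP (oB' == [::])) => [/eqP e|ne].
  subst oB'; exists (b1 :: oA); split; first by rewrite -cat1s perm_catC.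
  by rewrite /= gA andbT; apply/orP; right; rewrite betaN oppr_eq0.
move: gB => /= /andP[]; rewrite (negPf ne) /= => bb gB'.
have J := jacobi oA b1 oB'.
have : beta oA [:: b1] * beta (oA ++ [:: b1]) oB' != 0 \/
       beta [:: b1] (oA ++ oB') * beta oA oB' != 0.
  apply/orP; rewrite -negb_and; apply/negP => /andP[/eqP e1 /eqP e2].
  by move: J; rewrite e1 e2 addr0 => /eqP; rewrite mulf_eq0 (negPf bne) (negPf bb).
case; rewrite mulf_eq0 negb_or => /andP[h1 h2].
  have gA' : combgood (b1 :: oA).
    by rewrite /= gA andbT; apply/orP; right; rewrite betaN oppr_eq0.
  have h2' : beta (b1 :: oA) oB' != 0.
    by rewrite (@beta_perml (b1 :: oA) (oA ++ [:: b1])) // -cat1s perm_catC.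
  have [o [po go]] := IH (b1 :: oA) gA' gB' h2'.
  exists o; split => //; apply: perm_trans po _.
  by rewrite cat_cons -cat1s perm_catCA.
have [o' [po' go']] := IH oA gA gB' h2.
exists (b1 :: o'); split.
  apply: (@perm_trans _ (b1 :: oA ++ oB')); first by rewrite perm_cons.
  by rewrite -cat1s perm_catCA.
by rewrite /= go' andbT; apply/orP; right; rewrite (beta_permr _ po').
Qed.

Lemma tree_comb t : good t -> exists o, perm_eq o (leaves t) /\ combgood o.
Proof.
elim: t => [i|t1 IH1 t2 IH2] /=; first by exists [:: i]; rewrite perm_refl.
case/and3P => g1 g2 b.
have [oA [pA gA]] := IH1 g1; have [oB [pB gB]] := IH2 g2.
have b' : beta oA oB != 0 by rewrite (beta_perml _ pA) (beta_permr _ pB).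
have [o [po go]] := stepC gA gB b'.
by exists o; split => //; apply: perm_trans po _; apply: perm_cat.
Qed.

Lemma comb_exists o : o != [::] -> combgood o -> exists t, leaves t = o /\ good t.
Proof. by case: o => // x o' _ g; exists (comb x o'); rewrite comb_leaves comb_good. Qed.

Lemma prod_ord0 m (G : 'I_m.+1 -> F) :
  \prod_(k : 'I_m.+1 | (0 < k)%N) G k = \prod_(k : 'I_m) G (lift ord0 k).
Proof. by rewrite big_mkcond big_ord_recl /= mul1r. Qed.

Lemma prod_lift m (j : 'I_m) (G : 'I_m.+1 -> F) :
  \prod_(k : 'I_m.+1 | (lift ord0 j < k)%N) G k = \prod_(k : 'I_m | (j < k)%N) G (lift ord0 k).
Proof.
rewrite big_mkcond big_ord_recl /= mul1r [RHS]big_mkcond; apply: eq_bigr => k _.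
by rewrite /bump /= !add1n ltnS.
Qed.

Lemma comb_ord (h2 : H2) m (g : 'I_m -> 'I_n) : injective g ->
  (combgood [seq g j | j <- enum 'I_m] <->
   forall j : 'I_m, (j.+1 < m)%N -> \prod_(k : 'I_m | (j < k)%N) p (g j) (g k) != 1).
Proof.
elim: m g => [|m IH] g ginj; first by rewrite enum_ord0; split => // _ [].
have ginj' : injective (g \o lift ord0) by move=> a b /ginj /lift_inj.
have IH' := IH _ ginj'.
rewrite enum_ordSl /= -map_comp.
set rest := map _ _.
have g0 : g ord0 \notin rest.
  apply/mapP => [[k _ /ginj e]]; by move: (neq_lift ord0 k); rewrite -e eqxx.
have Pr : Pm [:: g ord0] rest = \prod_(k : 'I_m) p (g ord0) (g (lift ord0 k)).
  by rewrite /Pm big_seq1 /rest big_map big_enum.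
have re : (rest == [::]) = (m == 0%N) by rewrite -size_eq0 size_map size_enum_ord.
rewrite (beta_P h2 g0) Pr re.
split.
  case/andP => H0 Hr j; case: (unliftP ord0 j) => [j'|] -> /=.
    rewrite ltnS => jm; rewrite prod_lift; exact: (proj1 IH' Hr j' jm).
  rewrite prod_ord0 => m0.
  have mz : (m == 0%N) = false by apply/negbTE; rewrite -lt0n.
  by rewrite mz in H0.
move=> H; apply/andP; split.
  case: eqP => //= /eqP m0; move: (H ord0); rewrite prod_ord0; apply; by rewrite /= ltnS lt0n.
apply/(proj2 IH') => j jm; move: (H (lift ord0 j)); rewrite prod_lift; apply.
by rewrite /= /bump /= add1n ltnS.
Qed.

Lemma map_perm_enum m (tau : 'S_m) : perm_eq [seq tau j | j <- enum 'I_m] (enum 'I_m).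
Proof.
apply: uniq_perm; rewrite ?enum_uniq ?(map_inj_uniq perm_inj) ?enum_uniq // => x.
rewrite mem_enum; apply/mapP; exists ((tau^-1)%g x); rewrite ?mem_enum ?permKV //.
Qed.

Lemma tau_comb (h2 : H2) m (h : 'I_m -> 'I_n) : injective h ->
  (exists tau : 'S_m, \prod_(j : 'I_m | (j.+1 < m)%N)
        (\prod_(k : 'I_m | (j < k)%N) p (h (tau j)) (h (tau k)) - 1) != 0) <->
  (exists o, perm_eq o [seq h j | j <- enum 'I_m] /\ combgood o).
Proof.
move=> hinj; split.
  case=> tau Ht; exists [seq h (tau j) | j <- enum 'I_m]; split.
    by rewrite (map_comp h tau); apply: perm_map; apply: map_perm_enum.
  have ginj : injective (h \o tau) by move=> a b /hinj /perm_inj.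
  apply/(proj2 (comb_ord h2 ginj)) => j jm.
  move: Ht => /prodf_neq0 /(_ j jm).
  by rewrite subr_eq0.
case=> o [po go].
have [q Eq] := tuple_permP (s := o) (t := [tuple h j | j < m]) po.
exists q.
have ginj : injective (h \o q) by move=> a b /hinj /perm_inj.
have go' : combgood [seq (h \o q) j | j <- enum 'I_m].
  move: go; rewrite Eq /=; congr combgood; apply: eq_map => k /=; by rewrite tnth_mktuple.
move/(proj1 (comb_ord h2 ginj)): go' => H.
apply/prodf_neq0 => j jm.
by rewrite subr_eq0; apply: H.
Qed.

Definition Third := forall m (h : 'I_m -> 'I_n), (2 <= m)%N ->
  (forall a b : 'I_m, (a < b)%N -> (h b < h a)%N) ->
  exists tau : 'S_m, \prod_(j : 'I_m | (j.+1 < m)%N)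
     (\prod_(k : 'I_m | (j < k)%N) p (h (tau j)) (h (tau k)) - 1) != 0.

Lemma dec_inj m (h : 'I_m -> 'I_n) : (forall a b : 'I_m, (a < b)%N -> (h b < h a)%N) -> injective h.
Proof.
move=> hdec a b e; case: (ltngtP a b) => [ab|ba|/val_inj //].
  by move: (hdec _ _ ab); rewrite e ltnn.
by move: (hdec _ _ ba); rewrite e ltnn.
Qed.

Lemma Psi_nil (f : tens F n) : Psi 0 [::] f = f [::].
Proof.
rewrite /Psi (big_pred1 [tuple]) /= ?mul1r // => v.
rewrite tuple0 /=; by apply/esym/eqP.
Qed.

Lemma ideal_ext (f g : tens F n) : (forall w, f w = g w) -> nichols_ideal p f -> nichols_ideal p g.
Proof. by move=> H; rewrite (functional_extensionality _ _ H). Qed.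


Definition i1 : 'I_2 := lift ord0 ord0.
Definition t01 : 'S_2 := tperm ord0 i1.

Lemma ord2 (k : 'I_2) : k = ord0 \/ k = i1.
Proof. by case: k => [[|[|//]] hk]; [left|right]; apply: val_inj. Qed.

Lemma S2_cases (s : 'S_2) : s = 1%g \/ s = t01.
Proof.
have ne : s i1 != s ord0 by rewrite (inj_eq perm_inj).
case: (ord2 (s ord0)) => h0.
  left; apply/permP => k; rewrite perm1; case: (ord2 k) => -> //.
  by case: (ord2 (s i1)) ne => -> //; rewrite h0 eqxx.
right; apply/permP => k; rewrite /t01; case: (ord2 k) => ->; rewrite ?tpermL ?tpermR //.
by case: (ord2 (s i1)) ne => -> //; rewrite h0 eqxx.
Qed.

Lemma t01_neq1 : t01 != 1%g.
Proof. by apply/eqP => /permP /(_ ord0); rewrite perm1 /t01 tpermL. Qed.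

Lemma sum_S2 (G : 'S_2 -> F) : \sum_(s : 'S_2) G s = G 1%g + G t01.
Proof.
rewrite (bigD1 1%g) //= (big_pred1 t01) // => s /=.
case: (S2_cases s) => ->; first by rewrite eqxx eq_sym (negbTE t01_neq1).
by rewrite eqxx t01_neq1.
Qed.

Lemma perm_word1 m (v : m.-tuple 'I_n) : perm_word 1%g v = v.
Proof.
rewrite /perm_word invg1 -[RHS](map_tnth_enum v); apply: eq_map => k; by rewrite perm1.
Qed.

Lemma perm_coef1 m (v : m.-tuple 'I_n) : perm_coef p 1%g v = 1.
Proof.
rewrite /perm_coef big1 // => a _; rewrite big1 // => b /andP[ab]; rewrite !perm1 => ba.
by move: (ltn_trans ab ba); rewrite ltnn.
Qed.

Lemma perm_word_t01 (v : 2.-tuple 'I_n) : perm_word t01 v = [:: tnth v i1; tnth v ord0].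
Proof. by rewrite /perm_word /t01 tpermV !enum_ordSl enum_ord0 /= tpermL tpermR. Qed.

Lemma perm_coef_t01 (v : 2.-tuple 'I_n) : perm_coef p t01 v = p (tnth v ord0) (tnth v i1).
Proof.
rewrite /perm_coef big_ord_recl big_ord_recl big_ord0 mulr1.
rewrite big_mkcond big_ord_recl big_ord_recl big_ord0 /=.
rewrite [X in _ * X]big_mkcond big_ord_recl big_ord_recl big_ord0 /=.
rewrite /t01 -/i1 tpermL tpermR /=.
by rewrite !mul1r !mulr1.
Qed.

Lemma sym2 (f : tens F n) x y : symmetrizer p f [:: x; y] = f [:: x; y] + p y x * f [:: y; x].
Proof.
rewrite /symmetrizer /=.
under eq_bigr do rewrite big_mkcond.
rewrite exchange_big sum_S2 /=; congr (_ + _).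
  rewrite (bigD1 [tuple x; y]) //= perm_word1 ifT; last by apply/eqP.
  rewrite perm_coef1 mul1r big1 ?addr0 // => v ne.
  by rewrite perm_word1 (_ : (val v == [:: x; y]) = false) //; apply/negbTE; rewrite -val_eqE in ne.
rewrite (bigD1 [tuple y; x]) //= perm_word_t01 perm_coef_t01 /= big1 ?addr0.
  by rewrite !(tnth_nth x) /= ifT //; apply/eqP.
move=> v ne; rewrite perm_word_t01.
case: v / tupleP ne => a v'; case: v' / tupleP => b v''; rewrite tuple0 => ne.
rewrite !(tnth_nth a) /=.
case: eqP => // [[e1 e2]]; move: ne; rewrite e1 e2 => /eqP; case; exact: val_inj.
Qed.

Section Generic.
Variable E : btree n -> tens F n.
Hypothesis HS : forall t w, E t w != 0 -> perm_eq w (leaves t).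
Hypothesis HP : forall t, uniq (leaves t) -> (PE E t != 0) = good t.
Hypothesis h2 : H2.
Hypothesis two : (2%:R : F) != 0.

Lemma third_of_B : B_eq_F_oplus p E -> Third.
Proof.
case=> B1 _ m h m2 hdec.
have hinj := dec_inj hdec.
set w := [seq h j | j <- enum 'I_m].
have uw : uniq w by rewrite map_inj_uniq ?enum_uniq.
have sw : size w = m by rewrite size_map size_enum_ord.
have fs : tfinsupp (delta w) by exists [:: w] => x; rewrite inE /delta => /negbTE ->.
have [c [g [[k [ts [cs gE]]] hid]]] := B1 _ fs.
move/(ideal_iff h2 two): hid => [_ /(_ w uw)].
rewrite Psi_sub Psi_add Psi_scale (Psi_delta w) (_ : @tone F n = delta [::]) // Psi_delta0; last first.
  by apply/negP => /perm_size /=; rewrite sw => m0; move: m2; rewrite -m0.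
rewrite mulr0 add0r (Psi_ext _ _ gE) Psi_sum => /eqP; rewrite subr_eq0 => /eqP HL.
have : \sum_(i < k) cs i * Psi (size w) w (E (ts i)) != 0 by rewrite -HL Lam_neq0.
case: (boolP [exists i : 'I_k, Psi (size w) w (E (ts i)) != 0]) => [/existsP [i Hi] _| /existsPn Hn]; last first.
  by rewrite big1 ?eqxx // => i _; move/negPn: (Hn i) => /eqP ->; rewrite mulr0.
set t := ts i in Hi.
case: (boolP [exists v : (size w).-tuple 'I_n, perm_eq v w && (E t v != 0)]) => [/existsP [v /andP[pv ev]] | /existsPn Hn]; last first.
  exfalso; move: Hi; rewrite /Psi big1 ?eqxx // => v pv.
  by move: (Hn v); rewrite pv /= negbK => /eqP ->; rewrite mulr0.
have pl : perm_eq (leaves t) w by apply: perm_trans _ pv; rewrite perm_sym; exact: HS ev.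
have ul : uniq (leaves t) by rewrite (perm_uniq pl).
have gt : good t by rewrite -(HP ul) /PE (perm_size pl) (Psi_perm _ _ pl).
have [o [po go]] := tree_comb gt.
apply/(proj2 (tau_comb h2 hinj)); exists o; split => //; exact: perm_trans po pl.
Qed.


Lemma ideal_zero (f : tens F n) : (forall w, f w = 0) -> nichols_ideal p f.
Proof.
move=> H; apply/(ideal_iff h2 two); split; first by exists [::] => w _; rewrite H.
by move=> u _; rewrite /Psi big1 // => v _; rewrite H mulr0.
Qed.

Lemma ideal_add (f g : tens F n) : nichols_ideal p f -> nichols_ideal p g ->
  nichols_ideal p (fun w => f w + g w).
Proof.
move=> /(ideal_iff h2 two) [[s1 fs1] H1] /(ideal_iff h2 two) [[s2 fs2] H2'].
apply/(ideal_iff h2 two); split.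
  exists (s1 ++ s2) => w; rewrite mem_cat negb_or => /andP[w1 w2].
  by rewrite fs1 // fs2 // addr0.
by move=> u uu; rewrite (Psi_add (size u) u f g) H1 // H2' // addr0.
Qed.

Lemma ideal_scale a (f : tens F n) : nichols_ideal p f -> nichols_ideal p (fun w => a * f w).
Proof.
move=> /(ideal_iff h2 two) [[s1 fs1] H1].
apply/(ideal_iff h2 two); split.
  by exists s1 => w w1; rewrite fs1 // mulr0.
by move=> u uu; rewrite (Psi_scale (size u) u a f) H1 // mulr0.
Qed.

Definition Rep (f : tens F n) := exists c (l : seq (btree n * F)),
  nichols_ideal p (fun w => f w - (c * @tone F n w + \sum_(x <- l) x.2 * E x.1 w)).

Lemma Rep_ext (f g : tens F n) : (forall w, f w = g w) -> Rep f -> Rep g.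
Proof. by move=> H; rewrite (functional_extensionality _ _ H). Qed.

Lemma Rep_add (f g : tens F n) : Rep f -> Rep g -> Rep (fun w => f w + g w).
Proof.
move=> [c1 [l1 H1]] [c2 [l2 H2']]; exists (c1 + c2), (l1 ++ l2).
by apply: ideal_ext (ideal_add H1 H2') => w; rewrite big_cat /=; ring.
Qed.

Lemma Rep_scale a (f : tens F n) : Rep f -> Rep (fun w => a * f w).
Proof.
move=> [c1 [l1 H1]]; exists (a * c1), [seq (x.1, a * x.2) | x <- l1].
apply: ideal_ext (ideal_scale a H1) => w; rewrite big_map /= mulrBr mulrDr mulr_sumr mulrA.
by congr (_ - (_ + _)); apply: eq_bigr => x _; rewrite mulrA.
Qed.

Lemma Rep_sum (I : Type) (r : seq I) (G : I -> tens F n) : (forall x, Rep (G x)) ->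
  Rep (fun w => \sum_(x <- r) G x w).
Proof.
move=> HG; elim: r => [|x r IH].
  exists 0, [::]; apply: ideal_zero => w; rewrite !big_nil; ring.
apply: Rep_ext (Rep_add (HG x) IH) => w; by rewrite big_cons.
Qed.

Hypothesis th : Third.

Lemma tree_of_third w : uniq w -> w != [::] -> exists t, perm_eq (leaves t) w /\ good t.
Proof.
case: w => // x0 w' uw _; set w := x0 :: w'.
case: (boolP (w' == [::])) => [/eqP e|ne].
  by exists (BLeaf x0); rewrite /w e perm_refl.
set m := size w.
have m2 : (2 <= m)%N by rewrite /m /w /= ltnS lt0n size_eq0.
set L := [seq x <- enum 'I_n | x \in w].
have pL : perm_eq L w.
  apply: uniq_perm => //; first by apply: filter_uniq; apply: enum_uniq.
  by move=> x; rewrite mem_filter mem_enum andbT.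
set L' := rev L.
have pL' : perm_eq L' w by rewrite /L' perm_rev.
have sL : sorted (fun a b : 'I_n => (a < b)%N) L.
  have : sorted ltn (map val (enum 'I_n)) by rewrite val_enum_ord iota_ltn_sorted.
  rewrite sorted_map => s0; apply: sorted_filter => //; move=> a b c; exact: ltn_trans.
have sL' : sorted (fun a b : 'I_n => (b < a)%N) L' by rewrite /L' rev_sorted.
have szL' : size L' = m by rewrite (perm_size pL').
pose h := fun j : 'I_m => nth x0 L' j.
have hdec : forall a b : 'I_m, (a < b)%N -> (h b < h a)%N.
  move=> a b ab; rewrite /h.
  apply: (sorted_ltn_nth (leT := fun a b : 'I_n => (b < a)%N)) => //.
  - by move=> u v z /= vu zv; apply: ltn_trans vu.
  - by rewrite inE szL'.
  - by rewrite inE szL'.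
have hinj := dec_inj hdec.
have [o [po go]] := proj1 (tau_comb h2 hinj) (th m2 hdec).
have mh : [seq h j | j <- enum 'I_m] = L'.
  rewrite /h (map_comp (nth x0 L') val) val_enum_ord -szL'; exact: mkseq_nth.
rewrite mh in po.
have pow : perm_eq o w := perm_trans po pL'.
have o0 : o != [::] by apply/negP => /eqP e; move: pow; rewrite e => /perm_size.
have [t [lt gt]] := comb_exists o0 go.
by exists t; rewrite lt.
Qed.

Lemma Rep_delta w : Rep (delta w).
Proof.
case: (boolP (w == [::])) => [/eqP ->|wn].
  exists 1, [::]; apply: ideal_zero => x; rewrite big_nil /delta /tone; ring.
case: (boolP (uniq w)) => uw; last first.
  exists 0, [::]; apply: ideal_ext (_ : nichols_ideal p (delta w)) => [x|].
    by rewrite big_nil; ring.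
  apply/(ideal_iff h2 two); split.
    by exists [:: w] => x; rewrite inE /delta => /negbTE ->.
  move=> u uu; apply: Psi_delta0; apply/negP => pwu; move: uw; by rewrite (perm_uniq pwu) uu.
have [t [pl gt]] := tree_of_third uw wn.
have ul : uniq (leaves t) by rewrite (perm_uniq pl).
have rn : PE E t != 0 by rewrite HP.
set r := PE E t in rn.
exists 0, [:: (t, Lam w / r)].
apply: ideal_ext (_ : nichols_ideal p (tsub (delta w) (tscale (Lam w / r) (E t)))) => [x|].
  by rewrite big_seq1 /tsub /tscale /=; ring.
apply/(ideal_iff h2 two); split.
  exists (w :: permutations w) => x; rewrite inE negb_or mem_permutations => /andP[xw px].
  rewrite /tsub /tscale /delta (negbTE xw).
  case: (E t x =P 0) => [->|/eqP ne]; first by rewrite mulr0 subrr.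
  by move: px; rewrite (perm_trans (HS ne) pl).
move=> u uu; rewrite Psi_sub Psi_scale.
case: (boolP (perm_eq w u)) => pwu.
  rewrite -(perm_size pwu) -!(Psi_perm _ _ pwu) Psi_delta.
  have -> : Psi (size w) w (E t) = r by rewrite /r /PE (perm_size pl) (Psi_perm _ _ pl).
  by field.
rewrite Psi_delta0 // /Psi big1 ?mulr0 ?subrr // => v pv.
case: (E t v =P 0) => [->|/eqP ne]; first by rewrite mulr0.
have pvl : perm_eq v (leaves t) := HS ne.
have puw : perm_eq w u.
  apply: (perm_trans _ pv); apply: (@perm_trans _ (leaves t)); by rewrite perm_sym.
by rewrite puw in pwu.
Qed.


Lemma B_of_third : B_eq_F_oplus p E.
Proof.
split.
  move=> f [s fs].
  have Rf : Rep (fun w => \sum_(x <- undup s) f x * delta x w).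
    by apply: Rep_sum => x; apply: Rep_scale; apply: Rep_delta.
  have fE : forall w, \sum_(x <- undup s) f x * delta x w = f w.
    move=> w; case: (boolP (w \in s)) => ws.
      rewrite (bigD1_seq w) ?mem_undup ?undup_uniq //= /delta eqxx mulr1 big1 ?addr0 // => x xw.
      by rewrite eq_sym (negbTE xw) mulr0.
    rewrite fs // big1_seq // => x /andP[_ xs]; rewrite /delta.
    by case: eqP => [e|_]; [move: ws; rewrite e -mem_undup xs | rewrite mulr0].
  have [c [l H]] := Rep_ext fE Rf.
  exists c, (fun w => \sum_(x <- l) x.2 * E x.1 w); split; last exact: H.
  exists (size l), (fun i => (tnth (in_tuple l) i).1), (fun i => (tnth (in_tuple l) i).2) => w.
  by rewrite big_tnth.
move=> c g [k [ts [cs gE]]] /(ideal_iff h2 two) [_ /(_ [::] isT)] /=.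
rewrite Psi_nil /tsub /tadd /tscale /tone gE /= big1 => [|i _]; last by rewrite (supp_nil HS) mulr0.
by rewrite mulr1 subr0.
Qed.

End Generic.

Lemma H2_of_B (E : btree n -> tens F n)
  (HZ : forall t i, E t [:: i; i] = 0)
  (HR : forall i j, i != j -> exists r, r != 0 /\ forall t, E t [:: j; i] = - r * E t [:: i; j]) :
  B_eq_F_oplus p E -> H2.
Proof.
case=> B1 _.
have fs : forall w, tfinsupp (delta w) by move=> w; exists [:: w] => x; rewrite inE /delta => /negbTE ->.
split.
  move=> i; have [c [g [[k [ts [cs gE]]] [_ hS]]]] := B1 _ (fs [:: i; i]).
  move: (hS [:: i; i]); rewrite sym2 /tsub /tadd /tscale /tone /delta gE.
  rewrite big1 => [|t _]; last by rewrite HZ mulr0.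
  rewrite eqxx /= mulr0 !addr0 subr0 mulr1 => /eqP; rewrite addr_eq0 => /eqP e.
  by rewrite -[p i i]opprK -e.
move=> i j ne; have [c [g [[k [ts [cs gE]]] [_ hS]]]] := B1 _ (fs [:: i; j]).
have [r [rn Hr]] := HR i j ne.
move: (hS [:: i; j]) (hS [:: j; i]); rewrite !sym2 /tsub /tadd /tscale /tone /delta !gE => e1 e2.
set G := \sum_(t < k) cs t * E (ts t) [:: i; j] in e1 e2.
have HG : \sum_(t < k) cs t * E (ts t) [:: j; i] = - r * G.
  by rewrite /G mulr_sumr; apply: eq_bigr => t _; rewrite Hr mulrCA.
have ji : ([:: j; i] == [:: i; j]) = false by rewrite eqseq_cons eq_sym (negbTE ne).
have ij : ([:: i; j] == [:: j; i]) = false by rewrite eqseq_cons (negbTE ne).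
move: e1 e2; rewrite HG ji eqxx /= !mulr0 !add0r => e1 e2.
have key : (1 - G) * (1 - p i j * p j i) =
  (1 - G + p j i * - (- r * G)) - p j i * (- (- r * G) + p i j * (1 - G)) by ring.
rewrite e1 e2 mulr0 subr0 in key.
move/eqP: key; rewrite mulf_eq0 => /orP[/eqP g1|/eqP]; last first.
  by move/eqP; rewrite subr_eq0 eq_sym => /eqP.
have G1 : G = 1 by apply/eqP; rewrite -subr_eq0 -oppr_eq0 opprB g1.
exfalso; move: e2; rewrite G1 subrr mulr0 addr0 mulr1 opprK => /eqP; by rewrite (negbTE rn).
Qed.


Lemma tmul2 (f g : tens F n) x y :
  tmul f g [:: x; y] = f [::] * g [:: x; y] + f [:: x] * g [:: y] + f [:: x; y] * g [::].
Proof. by rewrite /tmul /= !big_ord_recl big_ord0 /= addr0 addrA. Qed.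

Lemma Pm11 a b : Pm [:: a] [:: b] = p a b.
Proof. by rewrite /Pm !big_seq1. Qed.

Lemma Pm_perml a a' b : perm_eq a a' -> Pm a b = Pm a' b.
Proof. by move=> H; rewrite /Pm (perm_big _ H). Qed.

Lemma Pm_permr a b b' : perm_eq b b' -> Pm a b = Pm a b'.
Proof. by move=> H; rewrite /Pm; apply: eq_bigr => x _; rewrite (perm_big _ H). Qed.

Lemma minus_nil (t : btree n) : evalMinus F t [::] = 0.
Proof. exact: (supp_nil (@supp_minus)). Qed.

Lemma L_nil (t : btree n) : evalL p t [::] = 0.
Proof. exact: (supp_nil (@supp_L)). Qed.

Lemma gen2 (i x y : 'I_n) : tgen F i [:: x; y] = 0.
Proof. by rewrite /tgen eqseq_cons andbF. Qed.

Lemma minus_HZ (t : btree n) (i : 'I_n) : evalMinus F t [:: i; i] = 0.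
Proof.
case: t => [j|t1 t2] /=; first exact: gen2.
by rewrite /tsub !tmul2 !minus_nil; ring.
Qed.

Lemma minus_HR (i j : 'I_n) : i != j -> exists r : F, r != 0 /\
  forall t, evalMinus F t [:: j; i] = - r * evalMinus F t [:: i; j].
Proof.
move=> _; exists 1; split; first exact: oner_neq0.
case=> [k|t1 t2] /=; first by rewrite !gen2 mulr0.
by rewrite /tsub !tmul2 !minus_nil; ring.
Qed.

Lemma L_HZ (t : btree n) (i : 'I_n) : evalL p t [:: i; i] = 0.
Proof.
case: t => [j|t1 t2] /=; first exact: gen2.
rewrite /tsub /tscale !tmul2 !L_nil !pdeg_tdeg !mul0r !mulr0 !add0r !addr0.
case: (evalL p t1 [:: i] =P 0) => [->|/eqP n1]; first by rewrite !mul0r !mulr0 subrr.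
case: (evalL p t2 [:: i] =P 0) => [->|/eqP n2]; first by rewrite !mul0r !mulr0 subrr.
have p1 := supp_L n1; have p2 := supp_L n2.
rewrite -(Pm_perml _ p2) -(Pm_permr _ p1) -(Pm_perml _ p1) -(Pm_permr _ p2); ring.
Qed.

Lemma L_HR (i j : 'I_n) : i != j -> exists r : F, r != 0 /\
  forall t, evalL p t [:: j; i] = - r * evalL p t [:: i; j].
Proof.
move=> ne; exists (p i j / p j i); split; first by rewrite mulf_neq0 ?invr_eq0.
case=> [k|t1 t2] /=; first by rewrite !gen2 mulr0.
rewrite /tsub /tscale !tmul2 !L_nil !pdeg_tdeg !mul0r !mulr0 !add0r !addr0.
set P21 := Pm (leaves t2) (leaves t1); set P12 := Pm (leaves t1) (leaves t2).
set A := evalL p t1 [:: i] * evalL p t2 [:: j].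
set B := evalL p t2 [:: i] * evalL p t1 [:: j].
have hA : A * (p i j * P21 - p j i * P12) = 0.
  case: (A =P 0) => [->|/eqP nA]; first by rewrite mul0r.
  move: nA; rewrite /A mulf_eq0 negb_or => /andP[n1 n2].
  have p1 := supp_L n1; have p2 := supp_L n2.
  by rewrite /P21 /P12 -(Pm_perml _ p2) -(Pm_permr _ p1) -(Pm_perml _ p1) -(Pm_permr _ p2) !Pm11; ring.
have hB : B * (p j i * P21 - p i j * P12) = 0.
  case: (B =P 0) => [->|/eqP nB]; first by rewrite mul0r.
  move: nB; rewrite /B mulf_eq0 negb_or => /andP[n1 n2].
  have p1 := supp_L n1; have p2 := supp_L n2.
  by rewrite /P21 /P12 -(Pm_perml _ p2) -(Pm_permr _ p1) -(Pm_perml _ p1) -(Pm_permr _ p2) !Pm11; ring.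
have key : p j i * (P21 * (evalL p t1 [:: j] * evalL p t2 [:: i]) - P12 * (evalL p t2 [:: j] * evalL p t1 [:: i]))
         + p i j * (P21 * A - P12 * B) = 0.
  by rewrite -(addr0 0) -{1}hA -hB /A /B; ring.
have pji := pnz j i.
move/eqP: key; rewrite addr_eq0 => /eqP key.
apply: (mulfI pji); rewrite key /A /B; field. all: exact: pji.
Qed.

Lemma main (ch : [pchar F] =i pred0) :
  (B_eq_F_oplus p (evalL p) <-> B_eq_F_oplus p (evalMinus F (n:=n))) /\
  (B_eq_F_oplus p (evalMinus F (n:=n)) <-> cond3 p).
Proof.
have two : (2%:R : F) != 0 by rewrite (proj1 (pcharf0P F) ch).
have HSM := @supp_minus; have HSL := @supp_L.
have HPM : forall t, uniq (leaves t) -> (PE (@evalMinus F n) t != 0) = good t.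
  by move=> t _; apply: PE_neq0_minus.
have eqv : forall E, (forall t w, E t w != 0 -> perm_eq w (leaves t)) ->
    (H2 -> forall t, uniq (leaves t) -> (PE E t != 0) = good t) ->
    (forall t i, E t [:: i; i] = 0) ->
    (forall i j, i != j -> exists r, r != 0 /\ forall t, E t [:: j; i] = - r * E t [:: i; j]) ->
    (B_eq_F_oplus p E <-> H2 /\ Third).
  move=> E HS HP HZ HR; split.
    move=> B; have h2 := H2_of_B HZ HR B; split => //.
    exact: (third_of_B HS (HP h2) h2 two B).
  by case=> h2 th; apply: (B_of_third HS (HP h2) h2 two th).
have eM := eqv _ HSM (fun _ => HPM) minus_HZ minus_HR.
have eL := eqv _ HSL (fun h2 => PE_neq0_L h2) L_HZ L_HR.
have e3 : cond3 p <-> H2 /\ Third.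
  by split; [case=> a b c; split => // | case=> [[a b] c]; split].
split; [rewrite eM eL | rewrite eM e3]; done.
Qed.
End S.

Theorem proposition5p4 (F : fieldType) (n : nat) (p : 'I_n -> 'I_n -> F) :
  [pchar F] =i pred0 ->
  (forall i j, p i j != 0) ->
  (B_eq_F_oplus p (evalL p) <-> B_eq_F_oplus p (evalMinus F (n:=n))) /\
  (B_eq_F_oplus p (evalMinus F (n:=n)) <-> cond3 p).
Proof.
move=> ch pnz; exact: (@main F n p pnz ch).
Qed.
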